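(* Let $G$ be a finite solvable group with $\mathcal{I}(G)\neq G$ whose order is divisible by exactly three distinct primes. If the diameter of $\Gamma(G)$ is greater than $4$, then the prime graph $\Pi(G)$ is a path on three vertices; that is, for a suitable labeling $\{p,q,r\}$ of the prime divisors of $|G|$, the only edges of $\Pi(G)$ are $\{p,r\}$ and $\{r,q\}$.
   Context: For a finite group $G$, let $\widetilde{\Gamma}(G)$ be the graph with vertex set $G$ in which two distinct elements $x,y$ are adjacent if and only if $|\langle x,y\rangle|$ is divisible by at least three distinct primes. $\mathcal{I}(G)$ denotes the set of isolated vertices of $\widetilde{\Gamma}(G)$ and $\Gamma(G)$ is the subgraph induced on $G\setminus\mathcal{I}(G)$. The prime graph $\Pi(G)$ is the graph whose vertices are the primes dividing $|G|$, two distinct primes $p,q$ being adjacent if and only if $G$ has an element of order $pq$. *)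

(* Defs.v *)
From mathcomp Require Import all_boot all_fingroup all_solvable.
Set Implicit Arguments. Unset Strict Implicit. Unset Printing Implicit Defensive.
Local Open Scope group_scope.

Section Graphs.
Variable gT : finGroupType.

(* Adjacency in \widetilde{\Gamma}(G): distinct x,y with |<x,y>| divisible
   by at least three distinct primes. *)
Definition tadj : rel gT :=
  fun x y => (x != y) && (2 < size (primes #|<<[set x; y]>>|))%N.

Definition isolated (G : {set gT}) : {set gT} :=
  [set x in G | [forall y in G, ~~ tadj x y]].

Definition GammaV (G : {set gT}) : {set gT} := G :\: isolated G.

Definition Gadj (G : {set gT}) : rel gT :=
  fun x y => [&& x \in GammaV G, y \in GammaV G & tadj x y].

Definition dist_le (G : {set gT}) (k : nat) (x y : gT) : Prop :=
  exists s : seq gT, (size s <= k)%N /\ path (Gadj G) x s /\ last x s = y.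

(* diam Gamma(G) > k (distance infinite if not connected). *)
Definition diam_gt (G : {set gT}) (k : nat) : Prop :=
  exists x y, x \in GammaV G /\ y \in GammaV G /\ ~ dist_le G k x y.

Definition pi_edge (G : {set gT}) (p q : nat) : Prop :=
  [/\ p \in primes #|G|, q \in primes #|G|, p != q &
      exists2 g, g \in G & #[g] = (p * q)%N].
End Graphs.

(* Main.v *)
Require Import Defs.
From mathcomp Require Import all_boot all_fingroup all_solvable.
From mathcomp Require Import ssralg.
Set Implicit Arguments. Unset Strict Implicit. Unset Printing Implicit Defensive.
Import GRing.Theory FiniteModule.

Section CP.
Local Open Scope group_scope.
Variable gT : finGroupType.

Lemma sum_fix0 (M X : {group gT}) (abM : abelian M) (u : fmod_of abM) g :
  X \subset 'N(M) -> g \in X -> 'C_M[g] = 1 ->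
  (\sum_(x in X) u ^@ x)%R = 0%R.
Proof.
move=> nMX Xg CMg.
set S := (\sum_(x in X) u ^@ x)%R.
have fixS : (S ^@ g)%R = S.
  rewrite /S actr_sum.
  rewrite (reindex_inj (mulIg g^-1)) /=.
  apply: eq_big => [x|x Xx].
    by rewrite groupMr // groupV.
  idtac.
  have Xx1 : x \in X by rewrite -(groupMr x (groupVr Xg)).
  by rewrite -actrM ?(subsetP nMX) ?groupM ?groupV // mulgKV.
have : fmval S \in 'C_M[g].
  rewrite inE fmodP /=; apply/cent1P/commgP/conjg_fixP.
  by rewrite -fmvalJ ?(subsetP nMX) // fixS.
rewrite CMg inE => /eqP S1.
by apply: fmod_inj; rewrite S1.
Qed.
End CP.

Section CP2.
Local Open Scope group_scope.
Variable gT : finGroupType.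

Lemma CP (M A Y : {group gT}) : abelian M -> A \subset 'N(M) -> Y \subset 'N(M) ->
  Y \subset 'N(A) -> A :&: Y = 1 -> A :!=: 1 -> Y :!=: 1 ->
  {in Y, forall z, z != 1 -> 'C_A[z] = 1} ->
  {in A * Y, forall x, x != 1 -> 'C_M[x] = 1} ->
  coprime #|A| #|M| -> M :=: 1.
Proof.
move=> abM nMA nMY nAY tiAY ntA ntY regA regM coAM.
have defL : A <*> Y = A * Y by rewrite norm_joinEr.
set L := (A <*> Y)%G.
have sAL : A \subset L := joing_subl A Y.
have sYL : Y \subset L := joing_subr A Y.
have nML : L \subset 'N(M) by rewrite join_subG nMA.
have [a Aa nta] := trivgPn _ ntA.
have regMa : 'C_M[a] = 1.
  by apply: regM nta; rewrite -defL (subsetP sAL).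
pose h := fun pr : gT * gT => pr.2 ^ pr.1.
pose D := setX A (Y :\ 1).
have injh : {in D &, injective h}.
  move=> [a1 z] [b z'] /setXP[/= Aa1 /setD1P[ntz Yz]] /setXP[/= Ab /setD1P[ntz' Yz']].
  rewrite /h /= => eqz.
  set c := a1 * b^-1.
  have Ac : c \in A by rewrite groupM ?groupV.
  have zc : z ^ c = z' by rewrite /c conjgM eqz conjgK.
  have cA : [~ z, c] \in A.
    by rewrite commgEr groupM // memJ_norm ?groupV // (subsetP nAY).
  have cY : [~ z, c] \in Y by rewrite commgEl zc groupM ?groupV.
  have : [~ z, c] \in A :&: Y by rewrite inE cA.
  rewrite tiAY inE => /commgP czc.
  have : c \in 'C_A[z] by rewrite inE Ac; apply/cent1P; apply: commute_sym.
  rewrite regA // inE => /eqP c1.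
  have ab : a1 = b by apply/eqP; rewrite eq_mulgV1 -/c c1.
  by rewrite ab -zc c1 conjg1.
have imh : [set h pr | pr in D] = L :\: A.
  apply/eqP; rewrite eqEcard; apply/andP; split.
    apply/subsetP=> x /imsetP[[a1 z] /setXP[/= Aa1 /setD1P[ntz Yz]] ->].
    rewrite /h /= inE; apply/andP; split; last first.
      by apply: groupJ; [apply: (subsetP sYL) | apply: (subsetP sAL)].
    apply/negP=> Aza.
    have Az : z \in A by rewrite -(conjgK a1 z) groupJ ?groupV.
    have : z \in A :&: Y by rewrite inE Az.
    by rewrite tiAY inE (negPf ntz).
  rewrite card_in_imset // cardsX cardsD (setIidPr sAL) /= defL TI_cardMg //.
  have := cardsD1 1 Y; rewrite group1 add1n => ->.
  by rewrite mulnS addKn.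
apply/eqP; rewrite -subG1; apply/subsetP=> v Mv; rewrite inE.
pose u := fmod abM v.
have S0 : (\sum_(x in L) u ^@ x)%R = 0%R.
  by apply: (@sum_fix0 _ M L abM u a) => //; rewrite (subsetP sAL).
have SA : (\sum_(x in A) u ^@ x)%R = 0%R by apply: (@sum_fix0 _ M A abM u a).
rewrite (big_setID A) /= (setIidPr sAL) SA add0r -imh big_imset //= in S0.
have inner : forall a1, a1 \in A -> (\sum_(z in Y :\ 1%g) u ^@ (z ^ a1))%R = (- u)%R.
  move=> a1 Aa1.
  have nMa1 : a1 \in 'N(M) by rewrite (subsetP nMA).
  have : (\sum_(z in Y) u ^@ (z ^ a1))%R = 0%R.
    have -> : (\sum_(z in Y) u ^@ (z ^ a1))%R
            = ((\sum_(z in Y) (u ^@ a1^-1) ^@ z) ^@ a1)%R.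
      rewrite actr_sum; apply: eq_bigr => z Yz.
      have nMz : z \in 'N(M) by rewrite (subsetP nMY).
      by rewrite -!actrM ?groupM ?groupV.
    have [y0 Yy0 nty0] := trivgPn _ ntY.
    rewrite (@sum_fix0 _ M Y abM _ y0) ?act0r //.
    by apply: regM nty0; rewrite -defL (subsetP sYL).
  rewrite (big_setD1 1%g) //= conj1g actr1 => /eqP.
  by rewrite addrC addr_eq0 => /eqP.
have eD : forall pr : gT * gT, (pr \in D) = (pr.1 \in A) && (pr.2 \in Y :\ 1%g).
  by move=> [x y]; rewrite !inE.
rewrite (eq_bigl _ _ eD) /h /= in S0.
rewrite -(pair_big_dep (fun a1 : gT => a1 \in A) (fun _ z => z \in Y :\ 1%g) (fun a1 z => u ^@ (z ^ a1))%R) /= in S0.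
rewrite (eq_bigr _ inner) sumr_const mulNrn in S0.
have S1 : (u *+ #|A| = 0)%R by apply/eqP; rewrite -oppr_eq0 S0.
have := congr_fmod S1; rewrite fmvalZ fmval0 fmodK // => /eqP.
rewrite -order_dvdn => dvA.
have dvM : #[v] %| #|M| by apply: order_dvdG.
have : #[v] %| gcdn #|A| #|M| by rewrite dvdn_gcd dvA.
by rewrite (eqP coAM) dvdn1 order_eq1.
Qed.
End CP2.

Lemma pnat_prime_eq (p s n : nat) : p.-nat n -> prime s -> s %| n -> s = p.
Proof.
move=> pn ps sn; have n0 : (0 < n)%N by case/andP: pn.
by move/pnatP: pn => /(_ n0 s ps sn); rewrite inE => /eqP.
Qed.

Section BL.
Local Open Scope group_scope.
Variable gT : finGroupType.
Implicit Types x y z : gT.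

Lemma pelt_dvd (p : nat) x : prime p -> p.-elt x -> x != 1 -> (p %| #[x])%N.
Proof.
move=> pp px ntx; have gt1 : (1 < #[x])%N by rewrite order_gt1.
have := pdiv_dvd #[x]; rewrite (pnat_prime_eq px (pdiv_prime gt1) (pdiv_dvd _)).
by [].
Qed.

Lemma BLsub (M K A : {group gT}) (s t : nat) : abelian M -> M :!=: 1 ->
  K \subset 'N(M) -> coprime #|M| #|K| ->
  {in K, forall x, x != 1 -> 'C_M[x] = 1} ->
  A \subset K -> K \subset 'N(A) -> A :!=: 1 -> s.-group A -> prime s ->
  prime t -> (t %| #|K|)%N -> s != t ->
  exists2 x, x \in K & (s %| #[x])%N && (t %| #[x])%N.
Proof.
move=> abM ntM nMK coMK regM sAK nAK ntA sA ps pt tK st.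
have [y Ky oy] := Cauchy pt tK.
have nty : y != 1 by rewrite -order_gt1 oy prime_gt1.
have coAY : coprime #|A| #|<[y]>|.
  rewrite -orderE oy; apply: (pnat_coprime sA).
  by rewrite pnatE // !inE eq_sym.
case: (boolP [exists z in <[y]>, exists e in A, (z != 1) && (e != 1) && (e \in 'C[z])]).
  case/exists_inP=> z Yz /exists_inP[e Ae /andP[/andP[ntz nte] Cez]].
  exists (e * z).
    by rewrite groupM //; [exact: (subsetP sAK) | apply: (subsetP _ z Yz); rewrite cycle_subG].
  have cez : commute e z by apply/cent1P.
  rewrite orderM //; last first.
    apply: coprime_dvdl (order_dvdG Ae) _; apply: coprime_dvdr (order_dvdG Yz) _.
    exact: coAY.
  apply/andP; split; first by apply: dvdn_mulr; apply: pelt_dvd => //; apply: mem_p_elt Ae.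
  apply: dvdn_mull.
  have : (#[z] %| t)%N by rewrite -oy orderE; apply: order_dvdG.
  by move/(prime_nt_dvdP pt); rewrite order_eq1 => /(_ ntz) ->.
rewrite negb_exists_in => /forall_inP regA.
have regA' : {in <[y]>, forall z, z != 1 -> 'C_A[z] = 1}.
  move=> z Yz ntz; apply/eqP; rewrite -subG1; apply/subsetP=> e /setIP[Ae Cez].
  have := regA z Yz; rewrite negb_exists_in => /forall_inP/(_ e Ae).
  by rewrite ntz Cez /= andbT inE negbK.
have sYK : <[y]> \subset K by rewrite cycle_subG.
have M1 : M :=: 1.
  apply: (@CP _ M A <[y]>) => //.
  - exact: subset_trans sAK nMK.
  - exact: subset_trans sYK nMK.
  - exact: subset_trans sYK nAK.
  - exact: coprime_TIg.
  - by rewrite cycle_eq1.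
  - move=> x AYx; apply: regM; apply: (subsetP _ x AYx).
    by rewrite mulG_subG sAK.
  - rewrite coprime_sym; exact: coprime_dvdr (cardSg sAK) coMK.
by rewrite M1 eqxx in ntM.
Qed.
End BL.

Section Helpers.
Local Open Scope group_scope.
Variable gT : finGroupType.
Implicit Types x y z : gT.

Definition iso (r : nat) (H : {set gT}) := {in H, forall x, (r %| #[x])%N -> r.-elt x}.

Lemma reg_helper (r : nat) (H : {set gT}) x m : prime r -> iso r H -> x * m \in H ->
  commute x m -> r^'.-elt x -> r.-elt m -> x != 1 -> m != 1 -> False.
Proof.
move=> pr isoH Hxm cxm rx rm ntx ntm.
have co : coprime #[x] #[m] by rewrite coprime_sym; apply: (pnat_coprime rm).
have rxm : r.-elt (x * m).
  apply: (isoH _ Hxm); rewrite orderM //; apply: dvdn_mull; exact: pelt_dvd.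
have : r.-nat #[x].
  apply: pnat_dvd rxm; rewrite orderM //; exact: dvdn_mulr.
move/pnat_1 => /(_ rx) /eqP; rewrite order_eq1; exact/negP.
Qed.

Lemma hall_dvd (pi : nat_pred) (G K : {group gT}) (t : nat) : pi.-Hall(G) K -> prime t ->
  t \in pi -> (t %| #|G|)%N -> (t %| #|K|)%N.
Proof.
move=> hK pt tpi tG; have sKG := pHall_sub hK.
move: tG; rewrite -(Lagrange sKG) Euclid_dvdM // => /orP[] // tI.
case/and3P: hK => _ _ /pnatP; rewrite indexg_gt0 => /(_ isT t pt tI).
by rewrite inE tpi.
Qed.

Lemma hall_with (pi : nat_pred) (H : {group gT}) u : solvable H -> u \in H -> pi.-elt u ->
  exists2 K : {group gT}, pi.-Hall(H) K & u \in K.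
Proof.
move=> solH Hu piu; have [K0 hK0] := Hall_exists pi solH.
have sub0 : <[u]> \subset H by rewrite cycle_subG.
have [g Hg sub] := Hall_Jsub solH hK0 sub0 piu.
exists (K0 :^ g^-1)%G; first by rewrite pHallJ ?groupV.
rewrite mem_conjgV; apply: (subsetP sub).
by rewrite memJ_conjg cycle_id.
Qed.

Lemma TI_lemma (M K : {group gT}) a b m g : K \subset 'N(M) -> M :&: K = 1 ->
  a \in K -> b \in K -> m \in M -> 'C_M[b] = 1 -> g \in M * K ->
  a \in K :^ g -> b ^ m \in K :^ g -> commute a m.
Proof.
move=> nMK tiMK Ka Kb Mm regb MKg aKg bKg.
have nMb : b \in 'N(M) := subsetP nMK b Kb.
have nMa : a \in 'N(M) := subsetP nMK a Ka.
have : g \in K * M by rewrite (normC nMK).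
case/mulsgP=> k1 m1 Kk1 Mm1 defg.
have eK : K :^ g = K :^ m1 by rewrite defg conjsgM conjGid.
rewrite eK in aKg bKg.
set n := m * m1^-1.
have Mn : n \in M by rewrite groupM ?groupV.
have bnK : b ^ n \in K.
  by rewrite /n conjgM -mem_conjg.
have cK : [~ b, n] \in K by rewrite commgEl groupM ?groupV.
have cM : [~ b, n] \in M.
  by rewrite commgEr groupM // memJ_norm ?groupV.
have : [~ b, n] \in M :&: K by rewrite inE cM.
rewrite tiMK inE => /commgP cbn.
have : n \in 'C_M[b] by rewrite inE Mn; apply/cent1P; apply: commute_sym.
rewrite regb inE => /eqP n1.
have mm1 : m = m1 by apply/eqP; rewrite eq_mulgV1 -/n n1.
rewrite -mm1 in aKg.
have aK : a ^ m^-1 \in K by rewrite -mem_conjg.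
have cK2 : [~ a, m^-1] \in K by rewrite commgEl groupM ?groupV.
have cM2 : [~ a, m^-1] \in M by rewrite commgEr groupM ?groupV // memJ_norm // !groupV.
have : [~ a, m^-1] \in M :&: K by rewrite inE cM2.
rewrite tiMK inE => /commgP cam.
by rewrite -(invgK m); apply: commuteV.
Qed.
End Helpers.

Section LU.
Local Open Scope group_scope.
Variable gT : finGroupType.
Implicit Types x y z : gT.

Lemma ntG_of_dvd (G : {group gT}) (a : nat) : prime a -> (a %| #|G|)%N -> G :!=: 1.
Proof.
move=> pa aG; apply/negP=> /eqP G1; move: aG; rewrite G1 cards1 dvdn1 => /eqP a1.
by rewrite a1 in pa.
Qed.

Lemma BL (M K : {group gT}) (a b : nat) : abelian M -> M :!=: 1 ->
  K \subset 'N(M) -> coprime #|M| #|K| ->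
  {in K, forall x, x != 1 -> 'C_M[x] = 1} -> solvable K ->
  prime a -> prime b -> a != b -> (a %| #|K|)%N -> (b %| #|K|)%N ->
  (forall s, prime s -> (s %| #|K|)%N -> (s == a) || (s == b)) ->
  exists2 x, x \in K & (a %| #[x])%N && (b %| #[x])%N.
Proof.
move=> abM ntM nMK coMK regM solK pa pb ab aK bK primK.
have ntK := ntG_of_dvd pa aK.
have [A [sAK nsAK ntA abA]] := solvable_norm_abelem solK (normal_refl K) ntK.
case/is_abelemP: abA => s ps /abelem_pgroup sA.
have sK : (s %| #|K|)%N.
  by case: (pgroup_pdiv sA ntA) => _ sA' _; apply: dvdn_trans sA' (cardSg sAK).
have nAK := normal_norm nsAK.
have [/eqP es|/eqP es] := orP (primK s ps sK); subst s.
  exact: (BLsub abM ntM nMK coMK regM sAK nAK ntA sA ps pb bK ab).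
have ba : b != a by rewrite eq_sym.
have [x Kx /andP[h1 h2]] := BLsub abM ntM nMK coMK regM sAK nAK ntA sA ps pa aK ba.
by exists x => //; rewrite h1 h2.
Qed.

Lemma regM_of (r : nat) (G M K : {group gT}) (pi : nat_pred) : prime r -> iso r G ->
  M \subset G -> K \subset G -> r.-group M -> pi.-group K -> {subset pi <= r^'} ->
  {in K, forall x, x != 1 -> 'C_M[x] = 1}.
Proof.
move=> pr isoG sMG sKG rM piK pir x Kx ntx.
apply/eqP; rewrite -subG1; apply/subsetP=> m /setIP[Mm Cm]; rewrite inE.
apply: contraT => ntm; exfalso; apply: (@reg_helper _ r G x m pr isoG) => //.
- by rewrite groupM //; [apply: (subsetP sKG) | apply: (subsetP sMG)].
- by apply: commute_sym; apply/cent1P.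
- exact: sub_p_elt pir (mem_p_elt piK Kx).
- exact: mem_p_elt rM Mm.
Qed.

Lemma not_in_pnat (pi : nat_pred) (n s : nat) : pi.-nat n -> prime s -> (s %| n)%N -> s \in pi.
Proof.
move=> pn ps sn; have n0 : (0 < n)%N by case/andP: pn.
by move/pnatP: pn => /(_ n0 _ ps sn).
Qed.

Lemma LUsub (G M : {group gT}) (s t r : nat) : solvable G ->
  prime s -> prime t -> prime r -> s != t -> t != r -> s != r ->
  (t %| #|G|)%N -> (r %| #|G|)%N ->
  (forall k, prime k -> (k %| #|G|)%N -> k \in [:: s; t; r]) -> iso r G ->
  M <| G -> M :!=: 1 -> s.-group M -> abelian M ->
  exists2 c, c \in G & (s %| #[c])%N && (t %| #[c])%N.
Proof.
move=> solG ps pt pr st tr sr tG rG primG isoG nsMG ntM sM abM.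
have [sMG nMG] := andP nsMG.
have [K hK] := Hall_exists s^' solG.
have sKG := pHall_sub hK; have s'K := pHall_pgroup hK.
case: (boolP [exists x in K, exists m in M, (x != 1) && (m != 1) && (m \in 'C[x])]).
  case/exists_inP=> x Kx /exists_inP[m Mm /andP[/andP[ntx ntm] Cm]].
  have cxm : commute x m by apply: commute_sym; apply/cent1P.
  have s'x : s^'.-elt x := mem_p_elt s'K Kx.
  have sm : s.-elt m := mem_p_elt sM Mm.
  have co : coprime #[x] #[m] by apply: (pnat_coprime s'x) ; rewrite pnatNK.
  have Gc : x * m \in G by rewrite groupM //; [exact: (subsetP sKG) | exact: (subsetP sMG)].
  exists (x * m) => //.
  rewrite orderM //.
  have smd : (s %| #[m])%N := pelt_dvd ps sm ntm.
  rewrite dvdn_mull //=.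
  have gt1 : (1 < #[x])%N by rewrite order_gt1.
  set t0 := pdiv #[x].
  have pt0 := pdiv_prime gt1.
  have t0x : (t0 %| #[x])%N := pdiv_dvd _.
  have t0G : (t0 %| #|G|)%N := dvdn_trans t0x (order_dvdG (subsetP sKG x Kx)).
  have t0s : t0 \in s^' := not_in_pnat s'x pt0 t0x.
  move: (primG t0 pt0 t0G); rewrite !inE.
  case/or3P=> /eqP e0.
  - by move: t0s; rewrite e0 !inE eqxx.
  - by rewrite -e0 dvdn_mulr.
  exfalso.
  have rc : r.-elt (x * m).
    apply: (isoG _ Gc); rewrite orderM // -e0; exact: dvdn_mulr.
  have : (s %| #[x * m])%N by rewrite orderM // dvdn_mull.
  move/(pnat_prime_eq rc ps)=> /eqP; exact/negP.
rewrite negb_exists_in => /forall_inP noC.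
have regM : {in K, forall x, x != 1 -> 'C_M[x] = 1}.
  move=> x Kx ntx; apply/eqP; rewrite -subG1; apply/subsetP=> m /setIP[Mm Cm].
  rewrite inE; apply: contraT => ntm.
  have := noC x Kx; rewrite negb_exists_in => /forall_inP/(_ m Mm).
  by rewrite ntx ntm Cm.
have coMK : coprime #|M| #|K| by apply: (pnat_coprime sM).
have [x Kx /andP[tx rx]] : exists2 x, x \in K & (t %| #[x])%N && (r %| #[x])%N.
  apply: (BL abM ntM (subset_trans sKG nMG) coMK regM (solvableS sKG solG) pt pr tr).
  - by apply: (hall_dvd hK pt) => //; rewrite !inE eq_sym.
  - by apply: (hall_dvd hK pr) => //; rewrite !inE eq_sym.
  move=> k pk kK.
  have := primG k pk (dvdn_trans kK (cardSg sKG)); rewrite !inE.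
  case/or3P=> [/eqP ek|->//|->]; last by rewrite orbT.
  by have := not_in_pnat s'K pk kK; rewrite ek !inE eqxx.
have := isoG x (subsetP sKG x Kx) rx.
move/pnat_prime_eq=> /(_ t pt tx) er; by rewrite er eqxx in tr.
Qed.
End LU.

Section LU2.
Local Open Scope group_scope.
Variable gT : finGroupType.
Implicit Types x y z : gT.

Lemma LU (G : {group gT}) (p q r : nat) : solvable G ->
  prime p -> prime q -> prime r -> p != q -> q != r -> p != r ->
  (p %| #|G|)%N -> (q %| #|G|)%N -> (r %| #|G|)%N ->
  (forall k, prime k -> (k %| #|G|)%N -> k \in [:: p; q; r]) -> iso r G ->
  exists2 c, c \in G & (p %| #[c])%N && (q %| #[c])%N.
Proof.
move=> solG pp pq pr pq' qr pr' pG qG rG primG isoG.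
have ntG := ntG_of_dvd pp pG.
have [M [sMG nsMG ntM abelM]] := solvable_norm_abelem solG (normal_refl G) ntG.
case/is_abelemP: abelM => s ps /and3P[sM abM _].
have sG : (s %| #|G|)%N.
  by case: (pgroup_pdiv sM ntM) => _ sM' _; apply: dvdn_trans sM' (cardSg sMG).
move: (primG s ps sG); rewrite !inE; case/or3P=> /eqP es; subst s.
- exact: (LUsub solG pp pq pr pq' qr pr' qG rG primG isoG nsMG ntM sM abM).
- have primG' : forall k, prime k -> (k %| #|G|)%N -> k \in [:: q; p; r].
    by move=> k pk kG; move: (primG k pk kG); rewrite !inE; case/or3P=> ->; rewrite ?orbT.
  have qp : q != p by rewrite eq_sym.
  have [c Gc /andP[h1 h2]] :=
    LUsub solG pq pp pr qp pr' qr pG rG primG' isoG nsMG ntM sM abM.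
  by exists c => //; rewrite h1 h2.
have [K hK] := Hall_exists r^' solG.
have sKG := pHall_sub hK; have r'K := pHall_pgroup hK.
have nMK : K \subset 'N(M) := subset_trans sKG (normal_norm nsMG).
have coMK : coprime #|M| #|K| by apply: (pnat_coprime sM).
have regM := regM_of pr isoG sMG sKG sM r'K (fun (k : nat) (h : k \in r^') => h).
have pK : (p %| #|K|)%N by apply: (hall_dvd hK pp) => //; rewrite !inE.
have qK : (q %| #|K|)%N by apply: (hall_dvd hK pq) => //; rewrite !inE.
have primK : forall k, prime k -> (k %| #|K|)%N -> (k == p) || (k == q).
  move=> k pk kK.
  have := primG k pk (dvdn_trans kK (cardSg sKG)); rewrite !inE.
  case/or3P=> [->//|->|/eqP ek]; first by rewrite orbT.
  by have := not_in_pnat r'K pk kK; rewrite ek !inE eqxx.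
have [c Kc h] := BL abM ntM nMK coMK regM (solvableS sKG solG) pp pq pq' pK qK primK.
by exists c => //; apply: (subsetP sKG).
Qed.
End LU2.

Section Cases.
Local Open Scope group_scope.
Variable gT : finGroupType.
Implicit Types x y z : gT.

Definition core (p q r : nat) (h : gT) := (r.-elt h && (h != 1)) || ((p %| #[h])%N && (q %| #[h])%N).

Lemma regM_of2 (r : nat) (H M : {group gT}) y : prime r -> iso r H ->
  M \subset H -> y \in H -> r.-elt y -> r^'.-group M -> y != 1 -> 'C_M[y] = 1.
Proof.
move=> pr isoH sMH Hy ry r'M nty.
apply/eqP; rewrite -subG1; apply/subsetP=> m /setIP[Mm Cm]; rewrite inE.
apply: contraT => ntm; exfalso.
apply: (@reg_helper _ r H m y pr isoH) => //.
- by rewrite groupM //; apply: (subsetP sMH).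
- by apply/cent1P.
- exact: mem_p_elt r'M Mm.
Qed.

Lemma dvd_join (H N : {group gT}) u w (k : nat) : u \in N -> w \in 'N(N) ->
  H :=: <<[set u; w]>> -> prime k -> (k %| #|H|)%N -> (k %| #|N|)%N || (k %| #[w])%N.
Proof.
move=> Nu Nw defH pk kH.
have nNW : <[w]> \subset 'N(N) by rewrite cycle_subG.
have defNW := norm_joinEr nNW.
have sH : H \subset N <*> <[w]>.
  rewrite defH gen_subG; apply/subsetP=> x; rewrite !inE => /orP[] /eqP ->.
    exact: (subsetP (joing_subl _ _)).
  exact: (subsetP (joing_subr _ _)) _ (cycle_id w).
have : (k %| #|N| * #|<[w]>|)%N.
  rewrite mul_cardG -defNW; apply: dvdn_mulr; exact: dvdn_trans kH (cardSg sH).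
by rewrite -orderE Euclid_dvdM.
Qed.

Lemma gen2_sub (K : {group gT}) u h : u \in K -> h \in K -> <<[set u; h]>> \subset K.
Proof.
by move=> Ku Kh; rewrite gen_subG; apply/subsetP=> x; rewrite !inE => /orP[] /eqP ->.
Qed.

Lemma pnat_of_ndvd (pi : nat_pred) (k : nat) (X : {group gT}) : prime k ->
  ~~ (k %| #|X|)%N -> (forall j, prime j -> (j %| #|X|)%N -> j != k -> j \in pi) ->
  pi.-group X.
Proof.
move=> pk nk hj; rewrite /pgroup; apply/pnatP=> // j pj jX.
apply: hj => //; apply: contraNneq nk => <-; exact: jX.
Qed.

Lemma hall_join (M K : {group gT}) (s : nat) : K \subset 'N(M) -> s.-group M -> s^'.-group K ->
  s^'.-Hall(M <*> K) K.
Proof.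
move=> nMK sM s'K.
have co : coprime #|M| #|K| by apply: (pnat_coprime sM).
rewrite /pHall joing_subr s'K /= -divgS ?joing_subr //.
have -> : #|(M <*> K)%G| = (#|M| * #|K|)%N.
  by rewrite /= (norm_joinEr nMK) TI_cardMg ?coprime_TIg.
by rewrite mulnK // pnatNK.
Qed.

Lemma u_nt_dvd (p : nat) (u h : gT) : prime p -> p.-elt u -> u != 1 -> (p %| #|<<[set u; h]>>|)%N.
Proof.
move=> pp pu ntu; apply: dvdn_trans (pelt_dvd pp pu ntu) _.
by apply: order_dvdG; apply: mem_gen; rewrite !inE eqxx.
Qed.

Lemma h_dvd (k : nat) (u h : gT) : (k %| #[h])%N -> (k %| #|<<[set u; h]>>|)%N.
Proof.
move=> kh; apply: dvdn_trans kh _.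
by apply: order_dvdG; apply: mem_gen; rewrite !inE eqxx orbT.
Qed.
End Cases.

Section Cases2.
Local Open Scope group_scope.
Variable gT : finGroupType.
Implicit Types x y z : gT.

Variables p q r : nat.
Hypotheses (pp : prime p) (pq : prime q) (pr : prime r).
Hypotheses (pq' : p != q) (qr : q != r) (pr' : p != r).

Lemma CaseR (H M : {group gT}) (u w : gT) : solvable H -> H :=: <<[set u; w]>> ->
  (forall k, prime k -> (k %| #|H|)%N -> k \in [:: p; q; r]) ->
  (p %| #|H|)%N -> (q %| #|H|)%N -> iso r H -> p.-elt u -> u != 1 ->
  M <| H -> M :!=: 1 -> r.-group M -> abelian M ->
  exists2 h, h \in H & [&& core p q r h, (p %| #|<<[set u; h]>>|)%N,
                         (q %| #|<<[set u; h]>>|)%N & (r %| #|<<[set u; h]>>|)%N].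
Proof using pp pq pr pq' qr pr'.
move=> solH defH primH pH qH isoH pu ntu nsMH ntM rM abM.
have [sMH nMH] := andP nsMH.
have Hu : u \in H by rewrite defH mem_gen // !inE eqxx.
have r'u : r^'.-elt u.
  by apply: sub_p_elt pu => k; rewrite !inE => /eqP ->.
have [K hK Ku] := hall_with solH Hu r'u.
have sKH := pHall_sub hK; have r'K := pHall_pgroup hK.
have nMK : K \subset 'N(M) := subset_trans sKH nMH.
have coMK : coprime #|M| #|K| by apply: (pnat_coprime rM).
have regM := regM_of pr isoH sMH sKH rM r'K (fun (k : nat) (h : k \in r^') => h).
have pK : (p %| #|K|)%N by apply: (hall_dvd hK pp) => //; rewrite !inE.
have qK : (q %| #|K|)%N by apply: (hall_dvd hK pq) => //; rewrite !inE.
have primK : forall k, prime k -> (k %| #|K|)%N -> (k == p) || (k == q).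
  move=> k pk kK.
  have := primH k pk (dvdn_trans kK (cardSg sKH)); rewrite !inE.
  case/or3P=> [->//|->|/eqP ek]; first by rewrite orbT.
  by have := not_in_pnat r'K pk kK; rewrite ek !inE eqxx.
have [c1 Kc1 /andP[pc1 qc1]] :=
  BL abM ntM nMK coMK regM (solvableS sKH solH) pp pq pq' pK qK primK.
have ntc1 : c1 != 1.
  by apply: contraTneq pc1 => ->; rewrite order1 dvdn1; apply: contraTneq pp => ->.
have [m Mm ntm] := trivgPn _ ntM.
exists (c1 ^ m).
  by rewrite groupJ //; [apply: (subsetP sKH) | apply: (subsetP sMH)].
have qh : (q %| #[c1 ^ m])%N by rewrite orderJ.
have ph : (p %| #[c1 ^ m])%N by rewrite orderJ.
rewrite /core ph qh orbT /= u_nt_dvd // h_dvd //=.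
apply: contraT => nr.
set X := <<[set u; c1 ^ m]>>%G.
have r'X : r^'.-group X.
  apply: (pnat_of_ndvd pr nr) => j pj jX jr; by rewrite !inE.
set MK := (M <*> K)%G.
have sXMK : X \subset MK.
  apply: gen2_sub; first exact: (subsetP (joing_subr _ _)).
  by rewrite groupJ //; [apply: (subsetP (joing_subr _ _)) | apply: (subsetP (joing_subl _ _))].
have hK' := hall_join nMK rM r'K.
have solMK : solvable MK by apply: solvableS solH; rewrite join_subG sMH.
have [g MKg sXg] := Hall_Jsub solMK hK' sXMK r'X.
have tiMK : M :&: K = 1 by apply: coprime_TIg.
have cum : commute u m.
  apply: (TI_lemma nMK tiMK Ku Kc1 Mm (regM c1 Kc1 ntc1) (g := g^-1)).
  - by rewrite -(norm_joinEr nMK) groupV.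
  - rewrite mem_conjgV; apply: (subsetP sXg); rewrite memJ_conjg mem_gen // !inE eqxx //.
  - rewrite mem_conjgV; apply: (subsetP sXg); rewrite memJ_conjg mem_gen // !inE eqxx orbT //.
have : m \in 'C_M[u] by rewrite inE Mm; apply/cent1P; apply: commute_sym.
by rewrite (regM u Ku ntu) inE (negPf ntm).
Qed.

Lemma CaseQ (H M : {group gT}) (u w : gT) : solvable H -> H :=: <<[set u; w]>> ->
  (forall k, prime k -> (k %| #|H|)%N -> k \in [:: p; q; r]) ->
  (r %| #|H|)%N -> iso r H -> p.-elt u -> u != 1 -> ~~ (r %| #[w])%N ->
  M <| H -> M :!=: 1 -> q.-group M ->
  exists2 h, h \in H & [&& core p q r h, (p %| #|<<[set u; h]>>|)%N,
                         (q %| #|<<[set u; h]>>|)%N & (r %| #|<<[set u; h]>>|)%N].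
Proof using pp pq pr pq' qr pr'.
move=> solH defH primH rH isoH pu ntu nrw nsMH ntM qM.
have [sMH nMH] := andP nsMH.
have Hu : u \in H by rewrite defH mem_gen // !inE eqxx.
have Hw : w \in H by rewrite defH mem_gen // !inE eqxx orbT.
have r'M : r^'.-group M by apply: sub_pgroup qM => k; rewrite !inE => /eqP ->.
case: (boolP (u \in 'C(M))) => [Cu | nCu].
  exfalso.
  set C := 'C_H(M)%G.
  have uC : u \in C by rewrite inE Hu.
  have nCH : H \subset 'N(C) by apply: normsI (normG H) (norms_cent nMH).
  have nrC : ~~ (r %| #|C|)%N.
    apply/negP=> rC; have [y Cy oy] := Cauchy pr rC.
    have [m Mm ntm] := trivgPn _ ntM.
    case/setIP: Cy => Hy CMy.
    have cym : commute y m := centP CMy m Mm.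
    apply: (@reg_helper _ r H m y pr isoH).
    - by rewrite groupM //; apply: (subsetP sMH).
    - exact: commute_sym.
    - exact: mem_p_elt r'M Mm.
    - by rewrite /p_elt oy pnat_id.
    - exact: ntm.
    - by rewrite -order_gt1 oy prime_gt1.
  have := dvd_join uC (subsetP nCH w Hw) defH pr rH.
  by rewrite (negPf nrC) (negPf nrw).
have : ~~ (M \subset 'C[u]) by rewrite sub_cent1.
case/subsetPn=> m Mm nCm.
have q'u : q^'.-elt u.
  by apply: sub_p_elt pu => k; rewrite !inE => /eqP ->.
have [K hK Ku] := hall_with solH Hu q'u.
have sKH := pHall_sub hK; have q'K := pHall_pgroup hK.
have nMK : K \subset 'N(M) := subset_trans sKH nMH.
have rK : (r %| #|K|)%N by apply: (hall_dvd hK pr) => //; rewrite !inE eq_sym.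
have [y Ky oy] := Cauchy pr rK.
have Hy : y \in H := subsetP sKH y Ky.
have ry : r.-elt y by rewrite /p_elt oy pnat_id.
have nty : y != 1 by rewrite -order_gt1 oy prime_gt1.
exists (y ^ m).
  by rewrite groupJ //; apply: (subsetP sMH).
have rh : (r %| #[y ^ m])%N by rewrite orderJ oy.
have corh : core p q r (y ^ m).
  have nth : y ^ m != 1 by rewrite -order_gt1 orderJ oy prime_gt1.
  by rewrite /core /p_elt orderJ oy pnat_id // nth.
rewrite corh u_nt_dvd //= (h_dvd _ rh) andbT.
apply: contraT => nq.
set X := <<[set u; y ^ m]>>%G.
have q'X : q^'.-group X.
  apply: (pnat_of_ndvd pq nq) => j pj jX jq; by rewrite !inE.
set MK := (M <*> K)%G.
have sXMK : X \subset MK.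
  apply: gen2_sub; first exact: (subsetP (joing_subr _ _)).
  by rewrite groupJ //; [apply: (subsetP (joing_subr _ _)) | apply: (subsetP (joing_subl _ _))].
have hK' := hall_join nMK qM q'K.
have solMK : solvable MK by apply: solvableS solH; rewrite join_subG sMH.
have [g MKg sXg] := Hall_Jsub solMK hK' sXMK q'X.
have coMK : coprime #|M| #|K| by apply: (pnat_coprime qM).
have tiMK : M :&: K = 1 by apply: coprime_TIg.
have regy := regM_of2 pr isoH sMH Hy ry r'M nty.
have cum : commute u m.
  apply: (TI_lemma nMK tiMK Ku Ky Mm regy (g := g^-1)).
  - by rewrite -(norm_joinEr nMK) groupV.
  - rewrite mem_conjgV; apply: (subsetP sXg); rewrite memJ_conjg mem_gen // !inE eqxx //.
  - rewrite mem_conjgV; apply: (subsetP sXg); rewrite memJ_conjg mem_gen // !inE eqxx orbT //.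
have Cm : m \in 'C[u] by apply/cent1P; apply: commute_sym.
by rewrite Cm in nCm.
Qed.
End Cases2.

Section Quo.
Local Open Scope group_scope.
Variable gT : finGroupType.

Lemma quo_gen2 (M : {group gT}) (u h : gT) : u \in 'N(M) -> h \in 'N(M) ->
  <<[set u; h]>> / M = <<[set coset M u; coset M h]>>.
Proof.
move=> Nu Nh; rewrite quotient_gen; last first.
  by apply/subsetP=> x /set2P[]->.
by rewrite quotientU !quotient_set1.
Qed.

Lemma quo_gen2_dvd (M : {group gT}) (u h : gT) (k : nat) : u \in 'N(M) -> h \in 'N(M) ->
  (k %| #|<<[set coset M u; coset M h]>>|)%N -> (k %| #|<<[set u; h]>>|)%N.
Proof.
move=> Nu Nh kd; rewrite -quo_gen2 // in kd; apply: dvdn_trans kd _.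
rewrite card_quotient ?dvdn_indexg // gen_subG.
by apply/subsetP=> x /set2P[]->.
Qed.
End Quo.

Section CLsec.
Local Open Scope group_scope.
Lemma CL (p q r : nat) : prime p -> prime q -> prime r -> p != q -> q != r -> p != r ->
  forall n (gT : finGroupType) (H : {group gT}) (u w : gT),
  (#|H| <= n)%N -> H :=: <<[set u; w]>> -> solvable H ->
  (forall k, prime k -> (k %| #|H|)%N -> k \in [:: p; q; r]) ->
  (p %| #|H|)%N -> (q %| #|H|)%N -> (r %| #|H|)%N -> iso r H -> p.-elt u ->
  exists2 h, h \in H & [&& core p q r h, (p %| #|<<[set u; h]>>|)%N,
                         (q %| #|<<[set u; h]>>|)%N & (r %| #|<<[set u; h]>>|)%N].
Proof.
move=> pp pq pr pq' qr pr'; elim=> [|n IH] gT H u w.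
  by rewrite leqNgt cardG_gt0.
move=> leHn defH solH primH pH qH rH isoH pu.
have Hu : u \in H by rewrite defH mem_gen // !inE eqxx.
have Hw : w \in H by rewrite defH mem_gen // !inE eqxx orbT.
case: (boolP (core p q r w)) => [cw | ncw].
  by exists w => //; rewrite cw -defH pH qH rH.
have nrw : ~~ (r %| #[w])%N.
  apply: contra ncw => rw; have rw' := isoH w Hw rw.
  have ntw : w != 1%g.
    by apply: contraTneq rw => ->; rewrite order1 dvdn1; apply: contraTneq pr => ->.
  by rewrite /core rw' ntw.
have ntu : u != 1%g.
  apply: contraNneq nrw => u1.
  have sH : H \subset <[w]> by rewrite defH gen2_sub ?cycle_id // u1 group1.
  by rewrite orderE; apply: dvdn_trans rH (cardSg sH).
have ntH := ntG_of_dvd pp pH.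
have [M [sMH nsMH ntM abelM]] := solvable_norm_abelem solH (normal_refl H) ntH.
have nMH := normal_norm nsMH.
case/is_abelemP: abelM => s ps /and3P[sM abM _].
have sH : (s %| #|H|)%N.
  by case: (pgroup_pdiv sM ntM) => _ sM' _; apply: dvdn_trans sM' (cardSg sMH).
move: (primH s ps sH); rewrite !inE; case/or3P=> /eqP es; subst s; [idtac |
  exact: (CaseQ pp pq pr pq' qr pr' solH defH primH rH isoH pu ntu nrw nsMH ntM sM) |
  exact: (CaseR pp pq pr pq' qr pr' solH defH primH pH qH isoH pu ntu nsMH ntM sM abM)].
case: (boolP (u \in M)) => [Mu | nMu].
  have := dvd_join Mu (subsetP nMH w Hw) defH pr rH; rewrite (negPf nrw) orbF.
  by move/(pnat_prime_eq sM pr)=> /eqP; rewrite eq_sym (negPf pr').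
have Nu : u \in 'N(M) := subsetP nMH u Hu.
have Nw : w \in 'N(M) := subsetP nMH w Hw.
set Hb := (H / M)%G.
have defHb : Hb :=: <<[set coset M u; coset M w]>> by rewrite /= defH quo_gen2.
have leHb : (#|Hb| <= n)%N.
  by rewrite -ltnS; apply: leq_trans leHn; apply: ltn_quotient.
have dHb : (#|Hb| %| #|H|)%N by rewrite /= card_quotient ?dvdn_indexg.
have kHb : forall k, prime k -> k != p -> (k %| #|H|)%N -> (k %| #|Hb|)%N.
  move=> k pk kp kH; move: kH; rewrite -(Lagrange sMH) Euclid_dvdM //.
  case/orP=> [kM|]; last by rewrite /= card_quotient.
  by have := pnat_prime_eq sM pk kM; move/eqP; rewrite (negPf kp).
have ntub : coset M u != 1%g by apply: contra nMu => /eqP; apply: coset_idr.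
have pub : p.-elt (coset M u) by apply: morph_p_elt.
have pHb : (p %| #|Hb|)%N.
  apply: dvdn_trans (pelt_dvd pp pub ntub) (order_dvdG _).
  by apply: mem_quotient.
have isoHb : iso r Hb.
  move=> xb /morphimP[x Nx Hx ->] rxb.
  apply: morph_p_elt => //; apply: (isoH _ Hx).
  exact: dvdn_trans rxb (morph_order _ Nx).
have primHb : forall k, prime k -> (k %| #|Hb|)%N -> k \in [:: p; q; r].
  by move=> k pk kHb'; apply: primH pk (dvdn_trans kHb' dHb).
have qp : q != p by rewrite eq_sym.
have rp : r != p by rewrite eq_sym.
have [hb Hhb /and4P[chb p1 q1 r1]] :=
  IH _ Hb _ _ leHb defHb (quotient_sol M solH) primHb pHb
     (kHb q pq qp qH) (kHb r pr rp rH) isoHb pub.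
case/morphimP: Hhb => h0 Nh0 Hh0 eh.
exists h0 => //.
have cor : core p q r h0.
  move: chb; rewrite /core eh; case/orP=> /andP[a1 a2].
    have rh0 : r.-elt h0.
      apply: (isoH _ Hh0); exact: dvdn_trans (pelt_dvd pr a1 a2) (morph_order _ Nh0).
    have nt : h0 != 1%g by apply: contraNneq a2 => ->; rewrite morph1.
    by rewrite rh0 nt.
  by rewrite (dvdn_trans a1 (morph_order _ Nh0)) (dvdn_trans a2 (morph_order _ Nh0)) orbT.
rewrite eh in p1 q1 r1.
by rewrite cor (quo_gen2_dvd Nu Nh0 p1) (quo_gen2_dvd Nu Nh0 q1) (quo_gen2_dvd Nu Nh0 r1).
Qed.
End CLsec.

Lemma size3 (a b r n : nat) : uniq [:: a; b; r] -> prime a -> prime b -> prime r ->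
  (0 < n)%N -> {subset primes n <= [:: a; b; r]} ->
  (2 < size (primes n))%N = [&& a %| n, b %| n & r %| n]%N.
Proof.
move=> un pa pb pr n0 sub.
case: (boolP [&& a %| n, b %| n & r %| n]%N) => [/and3P[an bn rn]|nall].
  apply: (@leq_trans (size [:: a; b; r])) => //.
  apply: uniq_leq_size un _ => x; rewrite !inE => /or3P[] /eqP ->;
    by rewrite mem_primes ?pa ?pb ?pr n0.
apply/negbTE; rewrite -leqNgt.
have [x1 [x2 sub2]] : exists x1 x2, {subset primes n <= [:: x1; x2]}.
  move: nall; rewrite !negb_and => /or3P[] nd.
  - exists b, r => x px; have := sub x px; rewrite !inE.
    case/or3P=> [/eqP ex|->//|->]; last by rewrite orbT.
    by move: px; rewrite ex mem_primes (negPf nd) !andbF.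
  - exists a, r => x px; have := sub x px; rewrite !inE.
    case/or3P=> [->//|/eqP ex|->]; last by rewrite orbT.
    by move: px; rewrite ex mem_primes (negPf nd) !andbF.
  - exists a, b => x px; have := sub x px; rewrite !inE.
    case/or3P=> [->//|->|/eqP ex]; first by rewrite orbT.
    by move: px; rewrite ex mem_primes (negPf nd) !andbF.
apply: (@leq_trans (size [:: x1; x2])) => //.
exact: uniq_leq_size (primes_uniq n) sub2.
Qed.

Section Graph.
Local Open Scope group_scope.
Variable gT : finGroupType.
Variable G : {group gT}.

Lemma tadj_sym (x y : gT) : tadj x y = tadj y x.
Proof. by rewrite /tadj eq_sym setUC. Qed.

Lemma Gadj_of (x y : gT) : x \in G -> y \in G -> tadj x y -> Gadj G x y.
Proof.
move=> Gx Gy txy; rewrite /Gadj txy andbT /GammaV /isolated !inE Gx Gy !andbT.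
apply/andP; split; rewrite /=.
  by apply/negP=> /forall_inP/(_ y Gy); rewrite txy.
by apply/negP=> /forall_inP/(_ x Gx); rewrite tadj_sym txy.
Qed.

Lemma dist_refl k (x : gT) : dist_le G k x x.
Proof. by exists [::]. Qed.

Lemma dist_edge (x y : gT) : Gadj G x y -> dist_le G 1 x y.
Proof. by move=> e; exists [:: y]; rewrite /= e. Qed.

Lemma dist_cat a b (x y z : gT) : dist_le G a x y -> dist_le G b y z -> dist_le G (a + b) x z.
Proof.
move=> [s [ls [ps es]]] [t [lt [pt et]]]; exists (s ++ t).
rewrite size_cat leq_add // cat_path last_cat ps es pt; split=> //.
Qed.

Lemma dist_mono a b (x y : gT) : (a <= b)%N -> dist_le G a x y -> dist_le G b x y.
Proof. by move=> ab [s [ls ps]]; exists s; split=> //; apply: leq_trans ls ab. Qed.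

Lemma GammaV_nb (u : gT) : u \in GammaV G -> exists2 w, w \in G & tadj u w.
Proof.
rewrite /GammaV /isolated !inE => /andP[nI Gu]; move: nI; rewrite Gu /= negb_forall_in.
by case/exists_inP=> w Gw; rewrite negbK; exists w.
Qed.
End Graph.

Section Diam.
Local Open Scope group_scope.
Variable gT : finGroupType.
Variable G : {group gT}.
Variables a b r : nat.
Hypotheses (pa : prime a) (pb : prime b) (pr : prime r).
Hypothesis un : uniq [:: a; b; r].
Hypotheses (aG : (a %| #|G|)%N) (bG : (b %| #|G|)%N) (rG : (r %| #|G|)%N).
Hypothesis sub : {subset primes #|G| <= [:: a; b; r]}.

Lemma primG' k : prime k -> (k %| #|G|)%N -> k \in [:: a; b; r].
Proof. by move=> pk kG; apply: sub; rewrite mem_primes pk cardG_gt0. Qed.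

Lemma tadjE (x y : gT) : x \in G -> y \in G ->
  tadj x y = (x != y) && [&& a %| #|<<[set x; y]>>|, b %| #|<<[set x; y]>>|
                            & r %| #|<<[set x; y]>>|]%N.
Proof.
move=> Gx Gy; rewrite /tadj; congr (_ && _).
apply: size3 => //.
move=> k; rewrite mem_primes => /and3P[pk _ kX]; apply: primG' => //.
by apply: dvdn_trans kX (cardSg (gen2_sub Gx Gy)).
Qed.

Lemma Gadj_sym (x y : gT) : Gadj G x y = Gadj G y x.
Proof. by rewrite /Gadj andbCA tadj_sym andbA andbC. Qed.

Hypothesis solG : solvable G.
Hypothesis nra : ~~ [exists g in G, (r %| #[g])%N && (a %| #[g])%N].
Hypothesis nrb : ~~ [exists g in G, (r %| #[g])%N && (b %| #[g])%N].

Lemma DIAM4 (u v : gT) : u \in GammaV G -> v \in GammaV G -> dist_le G 4 u v.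
Proof using pa pb pr un aG bG rG sub solG nra nrb.
move=> Vu Vv.
move: un; rewrite /= !inE !negb_or => /and3P[/andP[ab ar] br _].
have isoG : iso r G.
  move=> x Gx rx; apply/pnatP; first by rewrite order_gt0.
  move=> k pk kx; have := primG' pk (dvdn_trans kx (order_dvdG Gx)); rewrite !inE.
  case/or3P=> /eqP ek //; subst k.
    by move: nra; rewrite negb_exists_in => /forall_inP/(_ x Gx); rewrite rx kx.
  by move: nrb; rewrite negb_exists_in => /forall_inP/(_ x Gx); rewrite rx kx.
have [c Gc /andP[ac bc]] := LU solG pa pb pr ab br ar aG bG rG primG' isoG.
have [y Gy oy] := Cauchy pr rG.
pose rtype (h : gT) := r.-elt h && (h != 1).
pose abtype (h : gT) := (a %| #[h])%N && (b %| #[h])%N.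
have excl : forall h, rtype h -> abtype h -> False.
  move=> h /andP[rh _] /andP[ah _].
  by have := pnat_prime_eq rh pa ah; move/eqP; rewrite (negPf ar).
have adj : forall x z, x \in G -> z \in G -> rtype x -> abtype z -> Gadj G x z.
  move=> x z Gx Gz rx az; apply: Gadj_of => //; rewrite tadjE //.
  have xz : x != z by apply: contraPneq (excl x rx) => ->.
  case/andP: az => az bz; case/andP: rx => rx ntx.
  by rewrite xz /= h_dvd // h_dvd // u_nt_dvd.
have ry : rtype y by rewrite /rtype /p_elt oy pnat_id // -order_gt1 oy prime_gt1.
have abc : abtype c by rewrite /abtype ac bc.
have claim2 : forall h1 h2, h1 \in G -> h2 \in G -> core a b r h1 -> core a b r h2 ->
    dist_le G 2 h1 h2.
  move=> h1 h2 G1 G2; rewrite /core -/(rtype h1) -/(rtype h2).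
  case/orP=> [r1|ab1]; case/orP=> [r2|ab2].
  - apply: (@dist_cat _ _ 1 1 _ c); apply: dist_edge; first exact: adj.
    by rewrite Gadj_sym; apply: adj.
  - by apply: (@dist_mono _ _ 1); [|apply: dist_edge; apply: adj].
  - by apply: (@dist_mono _ _ 1); [|apply: dist_edge; rewrite Gadj_sym; apply: adj].
  apply: (@dist_cat _ _ 1 1 _ y); apply: dist_edge; last exact: adj.
  by rewrite Gadj_sym; apply: adj.
have claim1 : forall u, u \in GammaV G -> exists2 h, h \in G & core a b r h && Gadj G u h.
  move=> x Vx; have Gx : x \in G by move: Vx; rewrite /GammaV inE => /andP[].
  have [w Gw txw] := GammaV_nb Vx.
  move: txw; rewrite tadjE // => /andP[xw /and3P[aX bX rX]].
  case: (boolP (rtype x)) => [rx | nrx].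
    by exists c => //; rewrite /core -/(abtype c) abc orbT adj.
  case: (boolP (abtype x)) => [abx | nabx].
    exists y => //; rewrite /core -/(rtype y) ry /=.
    by rewrite Gadj_sym; apply: adj.
  have ntx : x != 1.
    apply/eqP=> x1; rewrite x1 in aX rX.
    have sX : <<[set 1; w]>> \subset <[w]> by rewrite gen2_sub ?cycle_id ?group1.
    have rw : (r %| #[w])%N by rewrite orderE; apply: dvdn_trans rX (cardSg sX).
    have aw : (a %| #[w])%N by rewrite orderE; apply: dvdn_trans aX (cardSg sX).
    have := isoG w Gw rw; move/pnat_prime_eq=> /(_ a pa aw) /eqP.
    by rewrite (negPf ar).
  have nrx' : ~~ (r %| #[x])%N.
    by apply: contra nrx => rx; rewrite /rtype (isoG x Gx rx) ntx.
  have eltx : a.-elt x || b.-elt x.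
    have primx : forall k, prime k -> (k %| #[x])%N -> (k == a) || (k == b).
      move=> k pk kx; have := primG' pk (dvdn_trans kx (order_dvdG Gx)); rewrite !inE.
      case/or3P=> [->//|->|/eqP ek]; first by rewrite orbT.
      by rewrite -ek kx in nrx'.
    case: (boolP (a %| #[x])%N) => ax.
      apply/orP; left; apply/pnatP; first by rewrite order_gt0.
      move=> k pk kx; case/orP: (primx k pk kx) => /eqP ek; first by rewrite ek inE.
      by move: nabx; rewrite /abtype ax -ek kx.
    apply/orP; right; apply/pnatP; first by rewrite order_gt0.
    move=> k pk kx; case/orP: (primx k pk kx) => /eqP ek; last by rewrite ek inE.
    by rewrite -ek kx in ax.
  set X := (<<[set x; w]>>)%G.
  have sXG : X \subset G by apply: gen2_sub.
  have solX : solvable X := solvableS sXG solG.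
  have isoX : iso r X by move=> z Xz; apply: isoG; apply: (subsetP sXG).
  have primX : forall k, prime k -> (k %| #|X|)%N -> k \in [:: a; b; r].
    by move=> k pk kX; apply: primG' pk (dvdn_trans kX (cardSg sXG)).
  have [h Xh /and4P[ch ah bh rh]] : exists2 h, h \in X &
      [&& core a b r h, (a %| #|<<[set x; h]>>|)%N,
          (b %| #|<<[set x; h]>>|)%N & (r %| #|<<[set x; h]>>|)%N].
    case/orP: eltx => ex.
      exact: (CL pa pb pr ab br ar (leqnn _) (erefl _) solX primX aX bX rX isoX ex).
    have primX' : forall k, prime k -> (k %| #|X|)%N -> k \in [:: b; a; r].
      move=> k pk kX; have := primX k pk kX; rewrite !inE.
      by case/or3P=> ->; rewrite ?orbT.
    have ba : b != a by rewrite eq_sym.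
    have [h Xh /and4P[ch bh ah rh]] :=
      CL pb pa pr ba ar br (leqnn _) (erefl _) solX primX' bX aX rX isoX ex.
    exists h => //; rewrite ah bh rh !andbT.
    by move: ch; rewrite /core [(b %| _) && _]andbC.
  have Gh : h \in G := subsetP sXG h Xh.
  exists h => //; rewrite ch /=; apply: Gadj_of => //; rewrite tadjE // ah bh rh !andbT.
  apply: contraTneq ch => <-; rewrite /core -/(rtype x) -/(abtype x).
  by rewrite (negPf nrx) (negPf nabx).
have [h1 G1 /andP[c1 e1]] := claim1 u Vu.
have [h2 G2 /andP[c2 e2]] := claim1 v Vv.
apply: (@dist_cat _ _ 1 3 _ h1); first exact: dist_edge.
apply: (@dist_cat _ _ 2 1 _ h2); first exact: claim2.
by apply: dist_edge; rewrite Gadj_sym.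
Qed.
End Diam.

Section Final.
Local Open Scope group_scope.
Variable gT : finGroupType.
Variable G : {group gT}.

Definition ExG (a b : nat) := [exists g in G, (a %| #[g])%N && (b %| #[g])%N].

Lemma ExG_sym a b : ExG a b = ExG b a.
Proof.
apply/idP/idP=> /exists_inP[g Gg /andP[h1 h2]]; apply/exists_inP; exists g => //;
  by rewrite h1 h2.
Qed.

Lemma ord_ab (x : gT) (a b : nat) : prime a -> prime b -> a != b ->
  (a %| #[x])%N -> (b %| #[x])%N -> #[x ^+ (#[x] %/ (a * b))] = (a * b)%N.
Proof.
move=> pa pb ab ax bx.
have co : coprime a b by rewrite prime_coprime // dvdn_prime2.
have abx : (a * b %| #[x])%N by rewrite Gauss_dvd // ax bx.
have ab0 : (0 < a * b)%N by rewrite muln_gt0 !prime_gt0.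
have nx : (#[x] %/ (a * b) %| #[x])%N.
  by rewrite -{2}(divnK abx) dvdn_mulr.
rewrite orderXdiv //.
have n0 : (0 < #[x] %/ (a * b))%N by rewrite divn_gt0 // dvdn_leq.
by rewrite -[X in X %/ _](divnK abx) mulKn.
Qed.

Lemma edge_of (a b : nat) : a \in primes #|G| -> b \in primes #|G| -> a != b -> ExG a b ->
  pi_edge G a b.
Proof.
move=> aP bP ab /exists_inP[g Gg /andP[ag bg]]; split=> //.
have pa : prime a by move: aP; rewrite mem_primes => /andP[].
have pb : prime b by move: bP; rewrite mem_primes => /andP[].
by exists (g ^+ (#[g] %/ (a * b))); [rewrite groupX | apply: ord_ab].
Qed.

Lemma Ex_of (a b : nat) : pi_edge G a b -> ExG a b.
Proof.
case=> _ _ _ [g Gg og]; apply/exists_inP; exists g => //.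
by rewrite og dvdn_mulr // dvdn_mull.
Qed.

Lemma final (P Q R : nat) : (primes #|G| =i [:: P; Q; R]) -> uniq [:: P; Q; R] ->
  ExG P R -> ExG R Q -> ~~ ExG P Q ->
  exists p q r : nat,
    [/\ perm_eq (primes #|G|) [:: p; q; r],
        pi_edge G p r, pi_edge G r q, ~ pi_edge G p q &
        forall a b, pi_edge G a b ->
          [\/ (a = p /\ b = r), (a = r /\ b = p), (a = r /\ b = q) | (a = q /\ b = r)]].
Proof.
move=> mP un ePR eRQ nPQ.
have un' := un; move: un'; rewrite /= !inE !negb_or => /and3P[/andP[pq pr] qr _].
exists P, Q, R; split.
- exact: uniq_perm (primes_uniq _) un mP.
- by apply: edge_of; rewrite ?mP ?inE ?eqxx ?orbT.
- by apply: edge_of; rewrite ?mP ?inE ?eqxx ?orbT // eq_sym.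
- by move/Ex_of; apply/negP.
move=> a b e; have [aP bP ab _] := e; have eab := Ex_of e.
move: aP bP; rewrite !mP !inE.
case/or3P=> /eqP ea; case/or3P=> /eqP eb; subst a b; rewrite ?eqxx // in ab.
- by rewrite eab in nPQ.
- by constructor 1.
- by rewrite ExG_sym eab in nPQ.
- by constructor 4.
- by constructor 2.
- by constructor 3.
Qed.
End Final.

Section Main.
Local Open Scope group_scope.
Variable gT : finGroupType.
Variable G : {group gT}.
Variables p q r : nat.
Hypotheses (pp : prime p) (pq : prime q) (pr : prime r).
Hypothesis un : uniq [:: p; q; r].
Hypotheses (pG : (p %| #|G|)%N) (qG : (q %| #|G|)%N) (rG : (r %| #|G|)%N).
Hypothesis sub : {subset primes #|G| <= [:: p; q; r]}.

Lemma x_dvd (k : nat) (x h : gT) : (k %| #[x])%N -> (k %| #|<<[set x; h]>>|)%N.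
Proof.
move=> kx; apply: dvdn_trans kx _.
by apply: order_dvdG; apply: mem_gen; rewrite !inE eqxx.
Qed.

Lemma cover_adj (x y : gT) : x \in G -> y \in G ->
  (p %| #[x])%N || (p %| #[y])%N -> (q %| #[x])%N || (q %| #[y])%N ->
  (r %| #[x])%N || (r %| #[y])%N -> dist_le G 1 x y.
Proof using pp pq pr un pG qG rG sub.
move=> Gx Gy cp cq cr; case: (eqVneq x y) => [-> | xy]; first exact: dist_refl.
apply: dist_edge; apply: Gadj_of => //.
rewrite (tadjE pp pq pr un sub Gx Gy) xy /=.
have hp : (p %| #|<<[set x; y]>>|)%N by case/orP: cp => [/(x_dvd y)|/(h_dvd x)].
have hq : (q %| #|<<[set x; y]>>|)%N by case/orP: cq => [/(x_dvd y)|/(h_dvd x)].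
have hr : (r %| #|<<[set x; y]>>|)%N by case/orP: cr => [/(x_dvd y)|/(h_dvd x)].
by rewrite hp hq hr.
Qed.
End Main.

Theorem lemma2p8 (gT : finGroupType) (G : {group gT}) :
  solvable G ->
  isolated G != G ->
  size (primes #|G|) = 3 ->
  diam_gt G 4 ->
  exists p q r : nat,
    [/\ perm_eq (primes #|G|) [:: p; q; r],
        pi_edge G p r, pi_edge G r q, ~ pi_edge G p q &
        forall a b, pi_edge G a b ->
          [\/ (a = p /\ b = r), (a = r /\ b = p), (a = r /\ b = q) | (a = q /\ b = r)]].
Proof.
move=> solG _ s3 [x0 [y0 [Vx [Vy nd]]]].
have GV : forall x, x \in GammaV G -> x \in G.
  by move=> x; rewrite /GammaV inE => /andP[].
case E: (primes #|G|) s3 => [|p [|q [|r [|t l]]]] //= _.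
have mP : forall k, (k \in primes #|G|) = (k \in [:: p; q; r]) by move=> k; rewrite E.
have un : uniq [:: p; q; r] by rewrite -E primes_uniq.
have sub : {subset primes #|G| <= [:: p; q; r]} by move=> k; rewrite mP.
have inP : forall k, k \in [:: p; q; r] -> prime k && (k %| #|G|)%N.
  by move=> k; rewrite -mP mem_primes => /and3P[-> _ ->].
have /andP[pp pG] : prime p && (p %| #|G|)%N by apply: inP; rewrite !inE eqxx.
have /andP[pq qG] : prime q && (q %| #|G|)%N by apply: inP; rewrite !inE eqxx orbT.
have /andP[pr rG] : prime r && (r %| #|G|)%N by apply: inP; rewrite !inE eqxx !orbT.
have un' := un; move: un'; rewrite /= !inE !negb_or => /and3P[/andP[pq' pr'] qr' _].
case: (boolP [exists g in G, [&& p %| #[g]%g, q %| #[g]%g & r %| #[g]%g]%N]).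
  case/exists_inP=> g Gg /and3P[pg qg rg]; exfalso; apply: nd.
  apply: (@dist_mono _ _ 2) => //; apply: (@dist_cat _ _ 1 1 _ g).
    by apply: (cover_adj pp pq pr un pG qG rG sub (GV _ Vx) Gg); rewrite ?pg ?qg ?rg ?orbT.
  by apply: (cover_adj pp pq pr un pG qG rG sub Gg (GV _ Vy)); rewrite ?pg ?qg ?rg ?orbT.
move=> npqr.
have Vne1 : forall x, x \in GammaV G -> x != 1%g.
  move=> x Vx'; have [w Gw txw] := GammaV_nb Vx'.
  apply/eqP => x1; rewrite x1 in txw.
  move: txw; rewrite (tadjE pp pq pr un sub (group1 G) Gw) => /andP[_ /and3P[hp hq hr]].
  have sX : (<<[set 1%g; w]>> \subset <[w]>)%g by rewrite gen2_sub ?cycle_id ?group1.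
  have d : forall k, (k %| #|<<[set 1%g; w]>>%g|)%N -> (k %| #[w]%g)%N.
    by move=> k h; rewrite orderE; apply: dvdn_trans h (cardSg sX).
  move: npqr; rewrite negb_exists_in => /forall_inP/(_ w Gw).
  by rewrite (d _ hp) (d _ hq) (d _ hr).
have permE : forall P Q R : nat, [:: P; Q; R] =i [:: p; q; r] ->
    uniq [:: P; Q; R] /\ {subset primes #|G| <= [:: P; Q; R]}.
  move=> P Q R eP; split; last by move=> k; rewrite eP mP.
  by rewrite (uniq_size_uniq un (fun k => esym (eP k))).
have ExGs := ExG_sym G.
have D4 : forall a b c : nat, [:: a; b; c] =i [:: p; q; r] ->
    ~~ ExG G c a -> ~~ ExG G c b -> dist_le G 4 x0 y0.
  move=> a b c eP nca ncb; have [una suba] := permE a b c eP.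
  have inPa : forall k, k \in [:: a; b; c] -> prime k && (k %| #|G|)%N.
    by move=> k; rewrite eP; apply: inP.
  have /andP[pa aG] : prime a && (a %| #|G|)%N by apply: inPa; rewrite !inE eqxx.
  have /andP[pb bG] : prime b && (b %| #|G|)%N by apply: inPa; rewrite !inE eqxx orbT.
  have /andP[pc cG] : prime c && (c %| #|G|)%N by apply: inPa; rewrite !inE eqxx !orbT.
  exact: (DIAM4 pa pb pc una aG bG cG suba solG nca ncb Vx Vy).
have tri : forall a b c : nat, [:: a; b; c] =i [:: p; q; r] -> ExG G a c -> ExG G c b ->
    ~~ ExG G a b -> exists p1 q1 r1 : nat,
    [/\ perm_eq [:: p; q; r] [:: p1; q1; r1],
        pi_edge G p1 r1, pi_edge G r1 q1, ~ pi_edge G p1 q1 &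
        forall a b, pi_edge G a b ->
          [\/ (a = p1 /\ b = r1), (a = r1 /\ b = p1), (a = r1 /\ b = q1) | (a = q1 /\ b = r1)]].
  move=> a b c eP eac ecb nab; have [una _] := permE a b c eP.
  rewrite -E; apply: (final (P:=a) (Q:=b) (R:=c)) => //.
  by move=> k; rewrite mP eP.
have e1 : [:: p; r; q] =i [:: p; q; r].
  by move=> k; rewrite !inE; case: (k == p); case: (k == q); case: (k == r).
have e2 : [:: q; r; p] =i [:: p; q; r].
  by move=> k; rewrite !inE; case: (k == p); case: (k == q); case: (k == r).
have e3 : [:: p; q; r] =i [:: p; q; r] by [].
case Epq: (ExG G p q); case Eqr: (ExG G q r); case Epr: (ExG G p r).
- exfalso; apply: nd.
  move: Epq; rewrite /ExG => /exists_inP[a0 Ga0 /andP[pa0 qa0]].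
  move: Eqr; rewrite /ExG => /exists_inP[b0 Gb0 /andP[qb0 rb0]].
  move: Epr; rewrite /ExG => /exists_inP[c0 Gc0 /andP[pc0 rc0]].
  have cov := cover_adj pp pq pr un pG qG rG sub.
  have hub : forall x, x \in GammaV G -> exists h, [/\ h \in G, dist_le G 1 x h,
      dist_le G 1 h x & [|| h == a0, h == b0 | h == c0]].
    move=> x Vx'; have Gx := GV x Vx'; have ntx := Vne1 x Vx'.
    have gt1 : (1 < #[x]%g)%N by rewrite order_gt1.
    set k := pdiv #[x]%g.
    have pk : prime k := pdiv_prime gt1.
    have kx : (k %| #[x]%g)%N := pdiv_dvd _.
    have kG : (k %| #|G|)%N := dvdn_trans kx (order_dvdG Gx).
    have : k \in [:: p; q; r] by apply: sub; rewrite mem_primes pk cardG_gt0.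
    rewrite !inE => /or3P[] /eqP ek; rewrite ek in kx.
    - exists b0; split; rewrite ?eqxx ?orbT //;
        by apply: cov; rewrite ?kx ?qb0 ?rb0 ?orbT.
    - exists c0; split; rewrite ?eqxx ?orbT //;
        by apply: cov; rewrite ?kx ?pc0 ?rc0 ?orbT.
    - exists a0; split; rewrite ?eqxx ?orbT //;
        by apply: cov; rewrite ?kx ?pa0 ?qa0 ?orbT.
  have hubs : forall h1 h2, [|| h1 == a0, h1 == b0 | h1 == c0] ->
      [|| h2 == a0, h2 == b0 | h2 == c0] -> dist_le G 1 h1 h2.
    move=> h1 h2 /or3P[] /eqP-> /or3P[] /eqP->;
      by [exact: dist_refl | apply: cov; rewrite ?pa0 ?qa0 ?qb0 ?rb0 ?pc0 ?rc0 ?orbT].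
  have [h1 [G1 d1 _ l1]] := hub x0 Vx.
  have [h2 [G2 _ d2 l2]] := hub y0 Vy.
  apply: (@dist_mono _ _ 3) => //; apply: (@dist_cat _ _ 1 2 _ h1) => //.
  apply: (@dist_cat _ _ 1 1 _ h2) => //; exact: hubs.
- by apply: (tri p r q e1); rewrite ?Epq ?Eqr ?Epr.
- by apply: (tri q r p e2); rewrite ?Epr ?Eqr // ExGs Epq.
- by exfalso; apply: nd; apply: (D4 p q r e3); rewrite ExGs ?Epr ?Eqr.
- by apply: (tri p q r e3); rewrite ?Epr ?Epq // ExGs Eqr.
- by exfalso; apply: nd; apply: (D4 q r p e2); rewrite ?Epq ?Epr.
- by exfalso; apply: nd; apply: (D4 p r q e1); rewrite ?Eqr // ExGs Epq.
- by exfalso; apply: nd; apply: (D4 p q r e3); rewrite ExGs ?Epr ?Eqr.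
Qed.
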